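(* Let $f$ be a real function on $[0,1]$ satisfying $|f(x')-f(x'')|\le H|x'-x''|^{1/N}$ for all $x',x''\in[0,1]$, and let $x^*\in[0,1]$ be a global minimizer of $f$ on $[0,1]$. Apply PLT to $f$ with the stopping rule disregarded, let $\{x^q\}$ be the resulting infinite sequence of trial points, and assume $p(l)\le Q<\infty$ for all $l>1$. For each iteration $l$, let $j=j(l)$ be the index of an interval $[x_{j-1},x_j]$ (in the ordering of Step 1 at iteration $l$) containing $x^*$, and define $K_j=\max\{(z_{j-1}-f(x^* ))(x^*-x_{j-1})^{-1/N},\ (z_j-f(x^* ))(x_j-x^* )^{-1/N}\}$ and $M_j=|z_{j-1}-z_j|(x_j-x_{j-1})^{-1/N}$. Suppose there is an infinite set of iteration numbers $\{h\}$ such that for every $l\in\{h\}$ one has $4^{1-1/N}K_j^2\ge M_j^2$ and $r\mu_j\ge 2^{1-1/N}K_j+\left(4^{1-1/N}K_j^2-M_j^2\right)^{1/2}$, where $j=j(l)$. Then $x^*$ is a limit point of $\{x^q\}$.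
   Context: Algorithm PLT (parallel information algorithm with local tuning) for minimizing $f$ on $[0,1]$; parameters: integer $N\ge1$, reliability parameter $r>1$, small number $\xi>0$. A ''trial'' is an evaluation of $f$ at a point. Step 0: perform $q(1)>1$ initial trials at $x^1=0$, $x^2=1$ and some interior points $x^3,\dots,x^{q(1)}\in(0,1)$; set $l=1$. At iteration $l$, let $q=q(l)$ be the number of trials made so far. Step 1: order all trial points as $0=x_1<x_2<\dots<x_q=1$ and set $z_i=f(x_i)$. Step 2: for $2\le j\le q$ compute $\mu_j=\max\{\lambda_j,\gamma_j,\xi\}$, where $\lambda_j=\max\{|z_i-z_{i-1}|/(x_i-x_{i-1})^{1/N}: i\in I_j\}$ with $I_2=\{2,3\}$, $I_j=\{j-1,j,j+1\}$ for $3\le j\le q-1$, $I_q=\{q-1,q\}$; and $\gamma_j=\mu\,(x_j-x_{j-1})^{1/N}/(X^{\max})^{1/N}$ with $\mu=\max\{|z_i-z_{i-1}|/(x_i-x_{i-1})^{1/N}:2\le i\le q\}$ and $X^{\max}=\max\{x_i-x_{i-1}:2\le i\le q\}$. Step 3: for $2\le j\le q$ compute the characteristic $R(j)=r\mu_j(x_j-x_{j-1})^{1/N}+\frac{(z_j-z_{j-1})^2}{r\mu_j(x_j-x_{j-1})^{1/N}}-(z_j+z_{j-1})$. Step 4: choose $p=p(l+1)\le q(l)-1$ and distinct indices $t_1,\dots,t_p$ being the indices of the $p$ largest characteristics ($t_1=\arg\max\{R(i):1<i\le q\}$, $t_k=\arg\max\{R(i):1<i\le q,\ i\ne t_s, 1\le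 s\le k-1\}$); the new trial points are $x^{q+k}=\tfrac12(x_{t_k-1}+x_{t_k})-\frac{1}{2r}\left(\frac{|z_{t_k}-z_{t_k-1}|}{\mu_{t_k}}\right)^N\operatorname{sign}(z_{t_k}-z_{t_k-1})$, $1\le k\le p$. Step 5: evaluate $f$ at these $p$ points in parallel, set $q(l+1)=q(l)+p(l+1)$, $l\leftarrow l+1$, and return to Step 1. (In the paper $f(x)=\phi(y(x))$ where $y$ is a Peano-type space-filling curve mapping $[0,1]$ onto a hyperinterval $D\subset\mathbb R^N$ and $\phi$ is Lipschitz on $D$, which yields the H\''older condition above.) *)

(* Defs.v *)
From Stdlib Require Import Reals Lra Lia.
Open Scope R_scope.

(* a^e for a >= 0, e > 0, with the convention 0^e = 0
   (Stdlib's Rpower 0 e is exp (e * ln 0) = 1, which is wrong for us). *)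
Definition hpow (a e : R) : R :=
  if Req_EM_T a 0 then 0 else Rpower a e.

Definition Rsgn (x : R) : R :=
  if Rlt_dec 0 x then 1 else if Rlt_dec x 0 then -1 else 0.

Fixpoint rmax_up (g : nat -> R) (lo k : nat) : R :=
  match k with
  | O => g lo
  | S k' => Rmax (rmax_up g lo k') (g (lo + k)%nat)
  end.

(* max { g i : lo <= i <= hi }  (used only with lo <= hi) *)
Definition rmax_range (g : nat -> R) (lo hi : nat) : R :=
  rmax_up g lo (hi - lo).

(* In what follows y : nat -> R is the ordered list of trial points of
   Step 1, y 1 = 0 < y 2 < ... < y q = 1, and z_i = f (y i). *)

Definition slope (N : nat) (f : R -> R) (y : nat -> R) (i : nat) : R :=
  Rabs (f (y i) - f (y (i - 1)%nat)) / hpow (y i - y (i - 1)%nat) (/ INR N).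

Definition glob_mu (N : nat) (f : R -> R) (y : nat -> R) (q : nat) : R :=
  rmax_range (slope N f y) 2 q.

Definition Xmax (y : nat -> R) (q : nat) : R :=
  rmax_range (fun i => y i - y (i - 1)%nat) 2 q.

(* lambda_j = max { slope i : i in I_j }, where I_j = {j-1,j,j+1} ∩ [2,q]
   (this gives I_2 = {2,3}, I_j = {j-1,j,j+1}, I_q = {q-1,q}). *)
Definition loc_lambda (N : nat) (f : R -> R) (y : nat -> R) (q j : nat) : R :=
  rmax_range (slope N f y) (Nat.max 2 (j - 1)) (Nat.min q (j + 1)).

Definition loc_gamma (N : nat) (f : R -> R) (y : nat -> R) (q j : nat) : R :=
  glob_mu N f y q * hpow (y j - y (j - 1)%nat) (/ INR N)
    / hpow (Xmax y q) (/ INR N).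

Definition mu_j (N : nat) (xi : R) (f : R -> R) (y : nat -> R) (q j : nat) : R :=
  Rmax (Rmax (loc_lambda N f y q j) (loc_gamma N f y q j)) xi.

Definition charR (N : nat) (r xi : R) (f : R -> R) (y : nat -> R) (q j : nat) : R :=
  let d := r * mu_j N xi f y q j * hpow (y j - y (j - 1)%nat) (/ INR N) in
  d + (f (y j) - f (y (j - 1)%nat)) ^ 2 / d - (f (y j) + f (y (j - 1)%nat)).

Definition new_point (N : nat) (r xi : R) (f : R -> R) (y : nat -> R) (q j : nat) : R :=
  (y (j - 1)%nat + y j) / 2
  - / (2 * r) * (Rabs (f (y j) - f (y (j - 1)%nat)) / mu_j N xi f y q j) ^ N
      * Rsgn (f (y j) - f (y (j - 1)%nat)).

Definition is_sorted_enum (xs : nat -> R) (n : nat) (y : nat -> R) : Prop :=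
  (forall i, (1 <= i < n)%nat -> y i < y (S i)) /\
  (forall i, (1 <= i <= n)%nat -> exists k, (1 <= k <= n)%nat /\ y i = xs k) /\
  (forall k, (1 <= k <= n)%nat -> exists i, (1 <= i <= n)%nat /\ xs k = y i).

(* A run of PLT (stopping rule disregarded):
   xs k = trial point x^k (k >= 1); q l = number of trials before iteration l;
   p (l+1) = number of points chosen at iteration l; ord l = the ordering of
   Step 1 at iteration l; t l k = index t_k chosen in Step 4 at iteration l. *)
Definition PLT_run (N : nat) (r xi : R) (f : R -> R) (xs : nat -> R)
  (q p : nat -> nat) (ord : nat -> nat -> R) (t : nat -> nat -> nat) : Prop :=
  (1 < q 1%nat)%nat /\ xs 1%nat = 0 /\ xs 2%nat = 1 /\
  (forall k, (3 <= k <= q 1%nat)%nat -> 0 < xs k < 1) /\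
  forall l, (1 <= l)%nat ->
    is_sorted_enum xs (q l) (ord l) /\
    (1 <= p (S l) <= q l - 1)%nat /\
    q (S l) = (q l + p (S l))%nat /\
    (forall k, (1 <= k <= p (S l))%nat ->
       (2 <= t l k <= q l)%nat /\
       (forall s, (1 <= s < k)%nat -> t l s <> t l k) /\
       (forall i, (2 <= i <= q l)%nat ->
          (forall s, (1 <= s < k)%nat -> t l s <> i) ->
          charR N r xi f (ord l) (q l) i <= charR N r xi f (ord l) (q l) (t l k)) /\
       xs (q l + k)%nat = new_point N r xi f (ord l) (q l) (t l k)).

(* Main.v *)
Require Import Defs.
From Stdlib Require Import Reals Lra Lia Psatz List Classical ZArith Arith.
Open Scope R_scope.

Lemma rmax_up_ge g lo k i : (i <= k)%nat -> g (lo + i)%nat <= rmax_up g lo k.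
Proof.
  induction k as [|k IH]; intros Hi; simpl.
  - assert (i = 0%nat) by lia; subst. rewrite Nat.add_0_r. lra.
  - destruct (Nat.eq_dec i (S k)) as [->|Hne].
    + apply Rmax_r.
    + eapply Rle_trans; [apply IH; lia|apply Rmax_l].
Qed.

Lemma rmax_up_le g lo k B : (forall i, (i <= k)%nat -> g (lo + i)%nat <= B) -> rmax_up g lo k <= B.
Proof.
  induction k as [|k IH]; intros H; simpl.
  - specialize (H 0%nat (le_n _)). rewrite Nat.add_0_r in H. exact H.
  - apply Rmax_lub; [apply IH; intros; apply H; lia| apply H; lia].
Qed.

Lemma rmax_range_ge g lo hi i : (lo <= i <= hi)%nat -> g i <= rmax_range g lo hi.
Proof.
  intros H. unfold rmax_range. replace i with (lo + (i - lo))%nat at 1 by lia.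
  apply rmax_up_ge; lia.
Qed.

Lemma rmax_range_le g lo hi B : (lo <= hi)%nat -> (forall i, (lo <= i <= hi)%nat -> g i <= B) -> rmax_range g lo hi <= B.
Proof.
  intros H1 H. unfold rmax_range. apply rmax_up_le. intros i Hi. apply H; lia.
Qed.

Lemma sorted_mono (y : nat -> R) n : (forall i, (1 <= i < n)%nat -> y i < y (S i)) ->
  forall i i', (1 <= i)%nat -> (i < i')%nat -> (i' <= n)%nat -> y i < y i'.
Proof.
  intros H i i' H1 H2 H3. induction i' as [|i' IH]; [lia|].
  destruct (Nat.eq_dec i i') as [->|Hne].
  - apply H; lia.
  - eapply Rlt_trans; [apply IH; lia| apply H; lia].
Qed.

Lemma sorted_split (y : nat -> R) n : (forall i, (1 <= i < n)%nat -> y i < y (S i)) ->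
  forall i j, (1 <= i <= n)%nat -> (2 <= j <= n)%nat -> y i <= y (j - 1)%nat \/ y j <= y i.
Proof.
  intros H i j Hi Hj.
  destruct (Compare_dec.le_lt_dec i (j-1)) as [Hl|Hl].
  - left. destruct (Nat.eq_dec i (j-1)) as [->|Hne]; [lra|].
    left. apply (sorted_mono y n H); lia.
  - right. destruct (Nat.eq_dec i j) as [->|Hne]; [lra|].
    left. apply (sorted_mono y n H); lia.
Qed.

Lemma pow_mean (u v : R) (n : nat) : 0 <= u -> 0 <= v ->
  ((u + v) / 2) ^ n <= (u ^ n + v ^ n) / 2.
Proof.
  intros Hu Hv. induction n as [|n IH]; simpl. lra.
  assert (Hc : 0 <= (u - v) * (u ^ n - v ^ n)).
  { destruct (Rle_dec u v).
    - assert (u ^ n <= v ^ n) by (apply pow_incr; lra). nra.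
    - assert (v ^ n <= u ^ n) by (apply pow_incr; lra). nra. }
  assert (0 <= (u+v)/2) by lra.
  apply Rle_trans with ((u+v)/2 * ((u^n + v^n)/2)).
  - apply Rmult_le_compat_l; auto.
  - nra.
Qed.

Lemma INRpos1 N : (1 <= N)%nat -> 0 < INR N.
Proof. intros; apply lt_0_INR; lia. Qed.

Lemma Rpower_root_pow N x : (1 <= N)%nat -> 0 < x -> Rpower x (/ INR N) ^ N = x.
Proof.
  intros HN Hx. rewrite <- Rpower_pow by (unfold Rpower; apply exp_pos).
  rewrite Rpower_mult. rewrite Rinv_l by (apply Rgt_not_eq, INRpos1; auto).
  apply Rpower_1; auto.
Qed.

Lemma Rpower_pow_root N x : (1 <= N)%nat -> 0 < x -> Rpower (x ^ N) (/ INR N) = x.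
Proof.
  intros HN Hx. rewrite <- Rpower_pow by auto.
  rewrite Rpower_mult. rewrite Rinv_r by (apply Rgt_not_eq, INRpos1; auto).
  apply Rpower_1; auto.
Qed.

Lemma Rpower_pos x e : 0 < Rpower x e.
Proof. unfold Rpower; apply exp_pos. Qed.

Lemma concav N a b : (1 <= N)%nat -> 0 < a -> 0 < b ->
  Rpower a (/ INR N) + Rpower b (/ INR N) <= Rpower 2 (1 - / INR N) * Rpower (a + b) (/ INR N).
Proof.
  intros HN Ha Hb. set (e := / INR N).
  set (u := Rpower a e). set (v := Rpower b e).
  assert (Hu : 0 < u) by apply Rpower_pos. assert (Hv : 0 < v) by apply Rpower_pos.
  assert (Hm := pow_mean u v N (Rlt_le _ _ Hu) (Rlt_le _ _ Hv)).
  assert (E1 : u ^ N = a) by (unfold u, e; apply Rpower_root_pow; auto).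
  assert (E2 : v ^ N = b) by (unfold v, e; apply Rpower_root_pow; auto).
  rewrite E1, E2 in Hm.
  assert (He : 0 <= e) by (unfold e; left; apply Rinv_0_lt_compat, INRpos1; auto).
  assert (H2 := Rle_Rpower_l _ _ e He (conj (pow_lt ((u+v)/2) N ltac:(lra)) Hm)).
  assert (E3 : Rpower (((u + v) / 2) ^ N) e = (u+v)/2) by (unfold e; apply Rpower_pow_root; auto; lra).
  rewrite E3 in H2.
  unfold Rdiv in H2. rewrite <- Rpower_mult_distr in H2 by lra.
  assert (Hi : Rpower (/ 2) e = Rpower 2 (- e)).
  { unfold Rpower. rewrite ln_Rinv by lra. f_equal; ring. }
  rewrite Hi in H2.
  replace (1 - e) with (1 + - e) by ring. rewrite Rpower_plus, Rpower_1 by lra.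
  lra.
Qed.

Lemma hpow_eq x e : 0 < x -> hpow x e = Rpower x e.
Proof. intros H; unfold hpow; destruct (Req_EM_T x 0); [lra|auto]. Qed.

Lemma alg_key d T u S A2 : 0 <= A2 -> 0 < d -> d >= T + u -> 0 <= u -> u * u = T * T - A2 -> S <= T ->
  d + A2 / d - S >= d / 2.
Proof.
  intros HA Hd H1 Hu H2 H3.
  assert (H5 : (d - T - u) * (d - T + u) >= 0) by (apply Rle_ge, Rmult_le_pos; lra).
  assert (H4 : d * d - 2 * T * d + 2 * A2 >= 0) by nra.
  replace (A2 / d) with ((d * d - 2 * T * d + 2 * A2) / (2 * d) + T - d / 2) by (field; lra).
  assert (0 <= (d * d - 2 * T * d + 2 * A2) / (2 * d)).
  { unfold Rdiv; apply Rmult_le_pos; [lra| left; apply Rinv_0_lt_compat; lra]. }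
  lra.
Qed.

Lemma charj_lb N r xi f (y : nat -> R) q j fs xstar :
  (1 <= N)%nat -> 0 < r -> 0 < xi ->
  y (j - 1)%nat < xstar < y j ->
  fs <= f (y (j - 1)%nat) -> fs <= f (y j) ->
  let K := Rmax ((f (y (j - 1)%nat) - fs) * Rpower (xstar - y (j - 1)%nat) (- / INR N))
                ((f (y j) - fs) * Rpower (y j - xstar) (- / INR N)) in
  let M := Rabs (f (y (j - 1)%nat) - f (y j)) * Rpower (y j - y (j - 1)%nat) (- / INR N) in
  Rpower 4 (1 - / INR N) * K ^ 2 >= M ^ 2 ->
  r * mu_j N xi f y q j >= Rpower 2 (1 - / INR N) * K + sqrt (Rpower 4 (1 - / INR N) * K ^ 2 - M ^ 2) ->
  charR N r xi f y q j + 2 * fs >= r * xi * Rpower (y j - y (j - 1)%nat) (/ INR N) / 2.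
Proof.
  intros HN Hr Hxi Hx Ha Hb K M H1 H2.
  set (e := / INR N) in *.
  set (a := y (j - 1)%nat) in *. set (b := y j) in *.
  set (mu := mu_j N xi f y q j) in *.
  assert (Hmu : xi <= mu) by (unfold mu, mu_j; apply Rmax_r).
  set (za := f a) in *. set (zb := f b) in *.
  set (D := Rpower (b - a) e).
  assert (HD : 0 < D) by apply Rpower_pos.
  assert (Hc : charR N r xi f y q j = r * mu * D + (zb - za) ^ 2 / (r * mu * D) - (zb + za)).
  { unfold charR. fold a b za zb mu e. rewrite hpow_eq by lra. reflexivity. }
  rewrite Hc.
  assert (HK0 : 0 <= K).
  { eapply Rle_trans; [|apply Rmax_l]. apply Rmult_le_pos; [lra| left; apply Rpower_pos]. }
  assert (Hza : za - fs <= K * Rpower (xstar - a) e).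
  { assert (E : za - fs = (za - fs) * Rpower (xstar - a) (- e) * Rpower (xstar - a) e).
    { rewrite Rpower_Ropp. field. apply Rgt_not_eq, Rpower_pos. }
    rewrite E. apply Rmult_le_compat_r; [left; apply Rpower_pos| apply Rmax_l]. }
  assert (Hzb : zb - fs <= K * Rpower (b - xstar) e).
  { assert (E : zb - fs = (zb - fs) * Rpower (b - xstar) (- e) * Rpower (b - xstar) e).
    { rewrite Rpower_Ropp. field. apply Rgt_not_eq, Rpower_pos. }
    rewrite E. apply Rmult_le_compat_r; [left; apply Rpower_pos| apply Rmax_r]. }
  assert (Hcv := concav N (xstar - a) (b - xstar) HN ltac:(lra) ltac:(lra)).
  fold e in Hcv. replace (xstar - a + (b - xstar)) with (b - a) in Hcv by ring. fold D in Hcv.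
  set (P2 := Rpower 2 (1 - e)) in *.
  set (T := P2 * K * D).
  assert (HS : zb + za - 2 * fs <= T).
  { unfold T. assert (K * (Rpower (xstar - a) e + Rpower (b - xstar) e) <= K * (P2 * D))
      by (apply Rmult_le_compat_l; lra). nra. }
  assert (HMD : M * D = Rabs (za - zb)).
  { unfold M, D. fold za zb e. rewrite Rpower_Ropp. field. apply Rgt_not_eq, Rpower_pos. }
  assert (H4 : Rpower 4 (1 - e) = P2 * P2).
  { unfold P2. rewrite Rpower_mult_distr by lra. f_equal; ring. }
  rewrite H4 in H1, H2.
  set (W := P2 * P2 * K ^ 2 - M ^ 2) in *.
  assert (HW : 0 <= W) by (unfold W; lra).
  set (u := D * sqrt W).
  assert (Hu : 0 <= u) by (unfold u; apply Rmult_le_pos; [lra| apply sqrt_pos]).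
  assert (Hu2 : u * u = T * T - (zb - za) ^ 2).
  { unfold u. replace (D * sqrt W * (D * sqrt W)) with (D * D * (sqrt W * sqrt W)) by ring.
    rewrite sqrt_sqrt by auto. unfold W, T.
    replace ((zb - za) ^ 2) with (Rabs (za - zb) * Rabs (za - zb)).
    2:{ rewrite <- Rabs_mult. rewrite Rabs_right. ring. apply Rle_ge; replace ((za - zb) * (za - zb)) with ((za-zb)^2) by ring; apply pow2_ge_0. }
    rewrite <- HMD. ring. }
  assert (Hd : r * mu * D >= T + u).
  { unfold T, u. assert (r * mu * D >= (P2 * K + sqrt W) * D).
    { apply Rmult_ge_compat_r; lra. } nra. }
  assert (Hdp : 0 < r * mu * D).
  { apply Rmult_lt_0_compat; [apply Rmult_lt_0_compat|]; lra. }
  assert (Hk := alg_key (r * mu * D) T u (zb + za - 2 * fs) ((zb - za) ^ 2) (pow2_ge_0 _) Hdp Hd Hu Hu2 HS).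
  assert (r * xi * D <= r * mu * D).
  { apply Rmult_le_compat_r; [lra|]. apply Rmult_le_compat_l; lra. }
  lra.
Qed.

Section S.
Variables (N : nat) (xi Hc : R) (f : R -> R) (y : nat -> R) (q : nat).
Hypothesis HN : (1 <= N)%nat.
Hypothesis Hxi : 0 < xi.
Hypothesis Hhol : forall x1 x2, 0 <= x1 <= 1 -> 0 <= x2 <= 1 ->
     Rabs (f x1 - f x2) <= Hc * hpow (Rabs (x1 - x2)) (/ INR N).
Hypothesis Hsort : forall i, (1 <= i < q)%nat -> y i < y (S i).
Hypothesis Hrange : forall i, (1 <= i <= q)%nat -> 0 <= y i <= 1.

Lemma len_pos i : (2 <= i <= q)%nat -> 0 < y i - y (i - 1)%nat.
Proof.
  intros H. replace i with (S (i - 1)) at 1 by lia. assert (Hs := Hsort (i - 1) ltac:(lia)). lra.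
Qed.

Lemma slope_bounds i : (2 <= i <= q)%nat -> 0 <= slope N f y i <= Hc.
Proof.
  intros H. assert (Hl := len_pos i H). unfold slope. rewrite hpow_eq by auto.
  assert (Hp := Rpower_pos (y i - y (i - 1)%nat) (/ INR N)).
  split.
  - unfold Rdiv. apply Rmult_le_pos; [apply Rabs_pos| left; apply Rinv_0_lt_compat; auto].
  - assert (Hh := Hhol (y i) (y (i - 1)%nat) (Hrange i ltac:(lia)) (Hrange (i - 1) ltac:(lia))).
    rewrite (Rabs_right (y i - y (i - 1)%nat)) in Hh by lra. rewrite hpow_eq in Hh by auto.
    apply (Rmult_le_reg_r (Rpower (y i - y (i - 1)%nat) (/ INR N))); auto.
    unfold Rdiv. rewrite Rmult_assoc, Rinv_l by lra. lra.
Qed.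

Lemma mu_ub t : (2 <= t <= q)%nat -> mu_j N xi f y q t <= Rmax Hc xi.
Proof.
  intros Ht. unfold mu_j. apply Rmax_lub; [|apply Rmax_r].
  eapply Rle_trans; [|apply Rmax_l].
  apply Rmax_lub.
  - unfold loc_lambda. apply rmax_range_le; [lia|]. intros i Hi. apply slope_bounds; lia.
  - unfold loc_gamma.
    assert (Hg0 : 0 <= glob_mu N f y q).
    { eapply Rle_trans; [apply (slope_bounds 2); lia|]. unfold glob_mu. apply rmax_range_ge; lia. }
    assert (Hg1 : glob_mu N f y q <= Hc).
    { unfold glob_mu. apply rmax_range_le; [lia|]. intros; apply slope_bounds; lia. }
    assert (Hl := len_pos t Ht).
    assert (HX : y t - y (t - 1)%nat <= Xmax y q).
    { unfold Xmax. apply (rmax_range_ge (fun i => y i - y (i - 1)%nat)); lia. }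
    rewrite !hpow_eq by lra.
    assert (Hle := Rle_Rpower_l _ _ (/ INR N) ltac:(left; apply Rinv_0_lt_compat, INRpos1; auto) (conj Hl HX)).
    assert (Hp2 := Rpower_pos (Xmax y q) (/ INR N)).
    assert (Hp1 := Rpower_pos (y t - y (t - 1)%nat) (/ INR N)).
    set (p1 := Rpower (y t - y (t - 1)%nat) (/ INR N)) in *.
    set (p2 := Rpower (Xmax y q) (/ INR N)) in *.
    set (g := glob_mu N f y q) in *.
    assert (g * p1 / p2 <= g).
    { unfold Rdiv. rewrite Rmult_assoc. assert (p1 * / p2 <= 1).
      { apply (Rmult_le_reg_r p2); auto. rewrite Rmult_assoc, Rinv_l by lra. lra. }
      assert (0 <= p1 * / p2) by (apply Rmult_le_pos; [lra| left; apply Rinv_0_lt_compat; auto]).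
      nra. }
    lra.
Qed.

Lemma slope_le_mu t : (2 <= t <= q)%nat -> slope N f y t <= mu_j N xi f y q t.
Proof.
  intros Ht. unfold mu_j. eapply Rle_trans; [|apply Rmax_l]. eapply Rle_trans; [|apply Rmax_l].
  unfold loc_lambda. apply rmax_range_ge; lia.
Qed.

Lemma newpt_bounds r t : 1 < r -> (2 <= t <= q)%nat ->
  let a := y (t - 1)%nat in let b := y t in
  a + (b - a) * (1 - / r) / 2 <= new_point N r xi f y q t <= b - (b - a) * (1 - / r) / 2.
Proof.
  intros Hr Ht a b. assert (Hl := len_pos t Ht). fold a b in Hl.
  set (mu := mu_j N xi f y q t).
  assert (Hmu : xi <= mu) by (unfold mu, mu_j; apply Rmax_r).
  assert (Hsm := slope_le_mu t Ht). fold mu in Hsm.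
  unfold slope in Hsm. rewrite hpow_eq in Hsm by auto. fold a b in Hsm.
  set (P := Rpower (b - a) (/ INR N)) in *.
  assert (HP : 0 < P) by apply Rpower_pos.
  set (A := Rabs (f b - f a)).
  assert (HA : A / mu <= P).
  { assert (A <= mu * P).
    { apply (Rmult_le_reg_r (/ P)); [apply Rinv_0_lt_compat; auto|].
      rewrite Rmult_assoc, Rinv_r by lra. rewrite Rmult_1_r. exact Hsm. }
    apply (Rmult_le_reg_r mu); [lra|]. unfold Rdiv. rewrite Rmult_assoc, Rinv_l by lra. lra. }
  assert (HA0 : 0 <= A / mu).
  { unfold Rdiv. apply Rmult_le_pos; [apply Rabs_pos| left; apply Rinv_0_lt_compat; lra]. }
  assert (Hw : (A / mu) ^ N <= b - a).
  { rewrite <- (Rpower_root_pow N (b - a)) by auto. apply pow_incr; split; auto. }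
  assert (Hw0 : 0 <= (A / mu) ^ N) by (apply pow_le; auto).
  assert (Hs : -1 <= Rsgn (f b - f a) <= 1).
  { unfold Rsgn. destruct (Rlt_dec 0 _); [lra|]. destruct (Rlt_dec _ 0); lra. }
  set (w := (A / mu) ^ N) in *. set (s := Rsgn (f b - f a)) in *.
  assert (Hr2 : 0 < / (2 * r)) by (apply Rinv_0_lt_compat; lra).
  assert (Hoff : Rabs (/ (2 * r) * w * s) <= (b - a) / (2 * r)).
  { rewrite !Rabs_mult. rewrite (Rabs_right (/ (2 * r))) by lra. rewrite (Rabs_right w) by lra.
    assert (Rabs s <= 1) by (apply Rabs_le; lra).
    unfold Rdiv. rewrite (Rmult_comm (b - a)).
    assert (Rabs s * w <= b - a).
    { assert (0 <= Rabs s) by apply Rabs_pos. nra. }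
    nra. }
  unfold new_point. fold a b mu. fold A w s.
  assert (E : (b - a) * (1 - / r) / 2 = (b - a) / 2 - (b - a) / (2 * r)) by (field; lra).
  rewrite E. revert Hoff; unfold Rabs; destruct (Rcase_abs _); intro Hoff; lra.
Qed.

Lemma chart_ub r t fs : 0 < r -> (2 <= t <= q)%nat -> (forall x, 0 <= x <= 1 -> fs <= f x) ->
  charR N r xi f y q t + 2 * fs <= (r * Rmax Hc xi + Hc ^ 2 / (r * xi)) * Rpower (y t - y (t - 1)%nat) (/ INR N).
Proof.
  intros Hr Ht Hfs. assert (Hl := len_pos t Ht).
  set (a := y (t - 1)%nat) in *. set (b := y t) in *.
  set (mu := mu_j N xi f y q t).
  assert (Hmu : xi <= mu) by (unfold mu, mu_j; apply Rmax_r).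
  assert (Hmu2 : mu <= Rmax Hc xi) by (apply mu_ub; auto).
  set (D := Rpower (b - a) (/ INR N)).
  assert (HD : 0 < D) by apply Rpower_pos.
  assert (Hch : charR N r xi f y q t = r * mu * D + (f b - f a) ^ 2 / (r * mu * D) - (f b + f a)).
  { unfold charR. fold a b mu. rewrite hpow_eq by lra. reflexivity. }
  rewrite Hch.
  assert (Hh := Hhol b a (Hrange t ltac:(lia)) (Hrange (t - 1) ltac:(lia))).
  rewrite (Rabs_right (b - a)) in Hh by lra. rewrite hpow_eq in Hh by auto. fold D in Hh.
  assert (HA2 : (f b - f a) ^ 2 <= (Hc * D) ^ 2).
  { rewrite <- (pow2_abs (f b - f a)).
    assert (0 <= Rabs (f b - f a)) by apply Rabs_pos. nra. }
  assert (Hfa := Hfs a (Hrange (t - 1) ltac:(lia))).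
  assert (Hfb := Hfs b (Hrange t ltac:(lia))).
  assert (Hd1 : r * xi * D <= r * mu * D).
  { apply Rmult_le_compat_r; [lra|]. apply Rmult_le_compat_l; lra. }
  assert (Hd0 : 0 < r * xi * D) by (apply Rmult_lt_0_compat; [apply Rmult_lt_0_compat|]; lra).
  assert (Hq : (f b - f a) ^ 2 / (r * mu * D) <= Hc ^ 2 / (r * xi) * D).
  { apply Rle_trans with ((Hc * D) ^ 2 / (r * xi * D)).
    - unfold Rdiv. apply Rmult_le_compat; [apply pow2_ge_0| left; apply Rinv_0_lt_compat; lra| auto|].
      apply Rinv_le_contravar; lra.
    - right. field. split; lra. }
  assert (r * mu * D <= r * Rmax Hc xi * D).
  { apply Rmult_le_compat_r; [lra|]. apply Rmult_le_compat_l; lra. }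
  nra.
Qed.

End S.

Lemma up_pos x : 0 <= x -> (0 < up x)%Z.
Proof. intros H. destruct (archimed x) as [H1 _]. apply lt_IZR. simpl. lra. Qed.

Lemma up_mono x y : x <= y -> (up x <= up y)%Z.
Proof.
  intros H. destruct (archimed x) as [H1 H2]. destruct (archimed y) as [H3 H4].
  assert (IZR (up x) - 1 < IZR (up y)) by lra.
  assert (IZR (up x - 1) < IZR (up y)) by (rewrite minus_IZR; simpl; lra).
  apply lt_IZR in H5. lia.
Qed.

Lemma pigeon (P : nat -> Prop) (X : nat -> R) (sep : R) : 0 < sep ->
  (forall l, P l -> 0 <= X l <= 1) ->
  (forall l l', P l -> P l' -> (l < l')%nat -> Rabs (X l' - X l) >= sep) ->
  ~ (forall L0, exists l, (L0 <= l)%nat /\ P l).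
Proof.
  intros Hs HX Hsep Hinf.
  set (bk := fun x => Z.to_nat (up (x / sep))).
  set (B := Z.to_nat (up (1 / sep))).
  assert (Hbk : forall l, P l -> (bk (X l) < S B)%nat).
  { intros l Hl. unfold bk, B. destruct (HX l Hl) as [H0 H1].
    assert (0 <= X l / sep) by (unfold Rdiv; apply Rmult_le_pos; [lra| left; apply Rinv_0_lt_compat; lra]).
    assert (X l / sep <= 1 / sep) by (unfold Rdiv; apply Rmult_le_compat_r; [left; apply Rinv_0_lt_compat|]; lra).
    assert (H4 := up_mono _ _ H2). assert (H3 := up_pos _ H). apply Nat.lt_succ_r. apply Z2Nat.inj_le; lia. }
  assert (Hinj : forall l l', P l -> P l' -> bk (X l) = bk (X l') -> l = l').
  { intros l l' Hl Hl' E. unfold bk in E.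
    destruct (HX l Hl) as [H0 H1]. destruct (HX l' Hl') as [H0' H1'].
    assert (0 <= X l / sep) by (unfold Rdiv; apply Rmult_le_pos; [lra| left; apply Rinv_0_lt_compat; lra]).
    assert (0 <= X l' / sep) by (unfold Rdiv; apply Rmult_le_pos; [lra| left; apply Rinv_0_lt_compat; lra]).
    assert (Hu1 := up_pos _ H). assert (Hu2 := up_pos _ H2).
    apply Z2Nat.inj in E; try lia.
    destruct (archimed (X l / sep)) as [A1 A2]. destruct (archimed (X l' / sep)) as [A3 A4].
    rewrite E in A1, A2.
    assert (Hd : Rabs (X l / sep - X l' / sep) < 1) by (apply Rabs_def1; lra).
    assert (Hd2 : Rabs (X l - X l') < sep).
    { replace (X l / sep - X l' / sep) with ((X l - X l') * / sep) in Hd by (field; lra).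
      rewrite Rabs_mult, (Rabs_right (/ sep)) in Hd by (left; apply Rinv_0_lt_compat; lra).
      apply (Rmult_lt_reg_r (/ sep)); [apply Rinv_0_lt_compat; lra|]. rewrite Rinv_r by lra. lra. }
    destruct (Nat.lt_trichotomy l l') as [Hlt|[Heq|Hgt]]; auto.
    - assert (Hh := Hsep l l' Hl Hl' Hlt). rewrite Rabs_minus_sym in Hh. lra.
    - assert (Hh := Hsep l' l Hl' Hl Hgt). lra. }
  assert (Hls : forall m, exists ls, length ls = m /\ NoDup ls /\ forall l, In l ls -> P l).
  { induction m as [|m IH].
    - exists nil. repeat split; auto. constructor. intros l [].
    - destruct IH as [ls [H1 [H2 H3]]].
      destruct (Hinf (S (list_max ls))) as [l [Hl1 Hl2]].
      exists (l :: ls). simpl. repeat split; auto.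
      + constructor; auto. intros Hin.
        assert (Hf := proj1 (list_max_le ls (list_max ls)) (le_n _)).
        rewrite Forall_forall in Hf. specialize (Hf l Hin). lia.
      + intros l' [<-|Hin]; auto. }
  destruct (Hls (S (S B))) as [ls [H1 [H2 H3]]].
  assert (Hnd : NoDup (map (fun l => bk (X l)) ls)).
  { apply NoDup_map_NoDup_ForallPairs; auto. intros a b Ha Hb E. apply Hinj; auto. }
  assert (Hincl : incl (map (fun l => bk (X l)) ls) (seq 0 (S B))).
  { intros x Hx. apply in_map_iff in Hx. destruct Hx as [l [<- Hl]].
    apply in_seq. split; [lia|]. simpl. apply Hbk; auto. }
  assert (Hlen := NoDup_incl_length Hnd Hincl).
  rewrite length_map, length_seq in Hlen. lia.
Qed.

Section P.
#[local] Set Default Proof Using "HN Hr Hxi Hrun".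
Variables (N : nat) (r xi : R) (f : R -> R) (xs : nat -> R) (q p : nat -> nat)
  (ord : nat -> nat -> R) (t : nat -> nat -> nat).
Hypothesis HN : (1 <= N)%nat.
Hypothesis Hr : 1 < r.
Hypothesis Hxi : 0 < xi.
Hypothesis Hrun : PLT_run N r xi f xs q p ord t.

Lemma q_step l : (1 <= l)%nat -> (q l + 1 <= q (S l))%nat.
Proof.
  intros Hl. destruct Hrun as (_&_&_&_&H). destruct (H l Hl) as (_&H2&H3&_). lia.
Qed.

Lemma q_lt l l' : (1 <= l)%nat -> (l < l')%nat -> (q l + 1 <= q l')%nat.
Proof.
  intros Hl Hll. induction l' as [|l' IH]; [lia|].
  destruct (Nat.eq_dec l l') as [->|Hne]; [apply q_step; auto|].
  assert (H1 := q_step l' ltac:(lia)). specialize (IH ltac:(lia)). lia.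
Qed.

Lemma q_ge l : (1 <= l)%nat -> (l + 1 <= q l)%nat.
Proof.
  intros Hl. induction l as [|l IH]; [lia|].
  destruct (Nat.eq_dec l 0) as [->|Hne].
  - destruct Hrun as (H1&_). lia.
  - assert (H := q_step l ltac:(lia)). specialize (IH ltac:(lia)). lia.
Qed.

Lemma enum l : (1 <= l)%nat -> is_sorted_enum xs (q l) (ord l).
Proof. intros Hl. destruct Hrun as (_&_&_&_&H). apply (H l Hl). Qed.

Lemma inv_range l : (1 <= l)%nat -> forall k, (1 <= k <= q l)%nat -> 0 <= xs k <= 1.
Proof.
  intros Hl. induction l as [|l IH]; [lia|].
  destruct (Nat.eq_dec l 0) as [->|Hne].
  - destruct Hrun as (H1&H2&H3&H4&_). intros k Hk.
    destruct (Nat.eq_dec k 1) as [->|]; [lra|].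
    destruct (Nat.eq_dec k 2) as [->|]; [lra|].
    assert (H := H4 k ltac:(lia)). lra.
  - specialize (IH ltac:(lia)). intros k Hk.
    destruct (le_lt_dec k (q l)) as [Hk2|Hk2]; [apply IH; lia|].
    destruct Hrun as (_&_&_&_&H). destruct (H l ltac:(lia)) as ((Hs&He1&He2)&Hp&Hq&Ht).
    set (k' := (k - q l)%nat).
    assert (Hk' : (1 <= k' <= p (S l))%nat) by (unfold k'; lia).
    destruct (Ht k' Hk') as (Htr&_&_&Hx).
    replace k with (q l + k')%nat by (unfold k'; lia). rewrite Hx.
    assert (Hb := newpt_bounds N xi f (ord l) (q l) HN Hxi Hs r (t l k') Hr Htr).
    simpl in Hb.
    assert (Hra : forall i, (1 <= i <= q l)%nat -> 0 <= ord l i <= 1).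
    { intros i Hi. destruct (He1 i Hi) as (kk&Hkk&->). apply IH; auto. }
    assert (Hl1 := len_pos N (ord l) (q l) HN Hs (t l k') Htr).
    assert (0 <= (ord l (t l k') - ord l (t l k' - 1)%nat) * (1 - / r) / 2).
    { assert (0 < 1 - / r) by (assert (/ r < 1) by (apply (Rmult_lt_reg_r r); [lra|]; rewrite Rinv_l; lra); lra).
      unfold Rdiv. apply Rmult_le_pos; [apply Rmult_le_pos|]; lra. }
    assert (Hr1 := Hra (t l k') ltac:(lia)). assert (Hr2 := Hra (t l k' - 1)%nat ltac:(lia)).
    lra.
Qed.

Lemma ord_range l : (1 <= l)%nat -> forall i, (1 <= i <= q l)%nat -> 0 <= ord l i <= 1.
Proof.
  intros Hl i Hi. destruct (enum l Hl) as (_&He1&_). destruct (He1 i Hi) as (kk&Hkk&->).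
  apply (inv_range l Hl); auto.
Qed.

Lemma newpt_sep l : (1 <= l)%nat ->
  let y := ord l in let T := t l 1%nat in
  forall k, (1 <= k <= q l)%nat ->
    Rabs (xs (q l + 1)%nat - xs k) >= (y T - y (T - 1)%nat) * (1 - / r) / 2.
Proof.
  intros Hl y T k Hk.
  destruct Hrun as (_&_&_&_&H). destruct (H l Hl) as ((Hs&He1&He2)&Hp&Hq&Ht).
  destruct (Ht 1%nat ltac:(lia)) as (Htr&_&_&Hx). rewrite Hx.
  assert (Hb := newpt_bounds N xi f (ord l) (q l) HN Hxi Hs r (t l 1%nat) Hr Htr).
  simpl in Hb. fold y T in Hb |- *.
  destruct (He2 k Hk) as (i&Hi&->).
  assert (Hl1 := len_pos N (ord l) (q l) HN Hs (t l 1%nat) Htr). fold y T in Hl1.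
  assert (0 <= (y T - y (T - 1)%nat) * (1 - / r) / 2).
  { assert (0 < 1 - / r) by (assert (/ r < 1) by (apply (Rmult_lt_reg_r r); [lra|]; rewrite Rinv_l; lra); lra).
    unfold Rdiv. apply Rmult_le_pos; [apply Rmult_le_pos|]; lra. }
  destruct (sorted_split y (q l) Hs i T Hi Htr) as [Hy|Hy].
  - fold y. rewrite Rabs_right; lra.
  - fold y. rewrite Rabs_left1; lra.
Qed.

End P.

Lemma shrink N r xi f xs q p ord t : (1 <= N)%nat -> 1 < r -> 0 < xi ->
  PLT_run N r xi f xs q p ord t -> forall eta, 0 < eta ->
  exists L0, forall l, (L0 <= l)%nat -> (1 <= l)%nat ->
    ord l (t l 1%nat) - ord l (t l 1%nat - 1)%nat < eta.
Proof.
  intros HN Hr Hxi Hrun eta Heta. apply NNPP. intros Hn.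
  assert (Hc : 0 < (1 - / r) / 2).
  { assert (/ r < 1) by (apply (Rmult_lt_reg_r r); [lra|]; rewrite Rinv_l; lra). lra. }
  apply (pigeon (fun l => (1 <= l)%nat /\ ord l (t l 1%nat) - ord l (t l 1%nat - 1)%nat >= eta)
    (fun l => xs (q l + 1)%nat) (eta * ((1 - / r) / 2))).
  - apply Rmult_lt_0_compat; lra.
  - intros l [Hl _]. apply (inv_range N r xi f xs q p ord t HN Hr Hxi Hrun (S l)); [lia|].
    assert (H := q_step N r xi f xs q p ord t HN Hr Hxi Hrun l Hl). lia.
  - intros l l' [Hl Hle] [Hl' Hle'] Hll.
    assert (Hq := q_lt N r xi f xs q p ord t HN Hr Hxi Hrun l l' Hl Hll).
    assert (Hs := newpt_sep N r xi f xs q p ord t HN Hr Hxi Hrun l' Hl' (q l + 1)%nat ltac:(lia)).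
    simpl in Hs. nra.
  - intros L0. apply NNPP. intros Hno. apply Hn. exists L0. intros l H1 H2.
    apply NNPP. intros H3. apply Hno. exists l. split; auto. split; auto. apply Rnot_lt_ge; auto.
Qed.

Fixpoint dmin (xs : nat -> R) (x e : R) (k : nat) : R :=
  match k with O => e | S k' => Rmin (dmin xs x e k') (Rabs (xs k - x)) end.

Lemma dmin_prop xs x e : 0 < e -> (forall k, (1 <= k)%nat -> xs k <> x) ->
  forall k, 0 < dmin xs x e k /\ dmin xs x e k <= e /\
    forall i, (1 <= i <= k)%nat -> dmin xs x e k <= Rabs (xs i - x).
Proof.
  intros He Hne k. induction k as [|k (IH1&IH2&IH3)]; simpl.
  - repeat split; auto; [lra|intros; lia].
  - assert (0 < Rabs (xs (S k) - x)) by (apply Rabs_pos_lt; intro; apply (Hne (S k)); [lia|lra]).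
    repeat split.
    + apply Rmin_pos; auto.
    + eapply Rle_trans; [apply Rmin_l|auto].
    + intros i Hi. destruct (Nat.eq_dec i (S k)) as [->|Hne2]; [apply Rmin_r|].
      eapply Rle_trans; [apply Rmin_l| apply IH3; lia].
Qed.

Theorem theorem2 (N : nat) (r xi Hc : R) (f : R -> R) (xstar : R)
  (xs : nat -> R) (q p : nat -> nat) (ord : nat -> nat -> R)
  (t : nat -> nat -> nat) (Q : nat) :
  (1 <= N)%nat -> 1 < r -> 0 < xi ->
  (forall x1 x2, 0 <= x1 <= 1 -> 0 <= x2 <= 1 ->
     Rabs (f x1 - f x2) <= Hc * hpow (Rabs (x1 - x2)) (/ INR N)) ->
  0 <= xstar <= 1 ->
  (forall x, 0 <= x <= 1 -> f xstar <= f x) ->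
  PLT_run N r xi f xs q p ord t ->
  (forall l, (1 < l)%nat -> (p l <= Q)%nat) ->
  (forall n, exists l, (n <= l)%nat /\ (1 <= l)%nat /\
     exists j, (2 <= j <= q l)%nat /\
       ord l (j - 1)%nat < xstar < ord l j /\
       let y := ord l in
       let K := Rmax ((f (y (j - 1)%nat) - f xstar) * Rpower (xstar - y (j - 1)%nat) (- / INR N))
                     ((f (y j) - f xstar) * Rpower (y j - xstar) (- / INR N)) in
       let M := Rabs (f (y (j - 1)%nat) - f (y j)) * Rpower (y j - y (j - 1)%nat) (- / INR N) in
       Rpower 4 (1 - / INR N) * K ^ 2 >= M ^ 2 /\
       r * mu_j N xi f y (q l) j
         >= Rpower 2 (1 - / INR N) * K + sqrt (Rpower 4 (1 - / INR N) * K ^ 2 - M ^ 2)) ->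
  forall eps, 0 < eps -> forall n, exists k, (n <= k)%nat /\ Rabs (xs k - xstar) < eps.
Proof.
  intros HN Hr Hxi Hhol Hxs Hmin Hrun HQ Hh eps Heps n.
  apply NNPP. intros Hnot.
  assert (Hfar : forall k, (n <= k)%nat -> Rabs (xs k - xstar) >= eps).
  { intros k Hk. apply Rnot_lt_ge. intros Hlt. apply Hnot. exists k. auto. }
  assert (Hne : forall k, (1 <= k)%nat -> xs k <> xstar).
  { intros k Hk. destruct (Hh k) as (l & Hkl & Hl1 & j & Hj & Hx & _).
    assert (Hq := q_ge N r xi f xs q p ord t HN Hr Hxi Hrun l Hl1).
    destruct (enum N r xi f xs q p ord t HN Hr Hxi Hrun l Hl1) as (Hs&_&He2).
    destruct (He2 k ltac:(lia)) as (i&Hi&->).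
    destruct (sorted_split (ord l) (q l) Hs i j Hi Hj); lra. }
  destruct (dmin_prop xs xstar eps Heps Hne n) as (Hd0 & Hde & Hdi).
  set (dl := dmin xs xstar eps n) in *.
  assert (Hdl : forall k, (1 <= k)%nat -> dl <= Rabs (xs k - xstar)).
  { intros k Hk. destruct (le_lt_dec k n); [apply Hdi; lia|]. assert (H := Hfar k ltac:(lia)). lra. }
  set (e := / INR N).
  assert (He : 0 < e) by (unfold e; apply Rinv_0_lt_compat, INRpos1; auto).
  set (D0 := Rpower (2 * dl) e).
  assert (HD0 : 0 < D0) by apply Rpower_pos.
  set (G := r * Rmax Hc xi + Hc ^ 2 / (r * xi)).
  assert (HG : 0 <= G).
  { unfold G. assert (xi <= Rmax Hc xi) by apply Rmax_r.
    assert (0 <= Hc ^ 2 / (r * xi)).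
    { unfold Rdiv. apply Rmult_le_pos; [apply pow2_ge_0| left; apply Rinv_0_lt_compat; nra]. }
    nra. }
  set (e0 := r * xi * D0 / (2 * (G + 1))).
  assert (He0 : 0 < e0).
  { unfold e0. apply Rmult_lt_0_compat; [apply Rmult_lt_0_compat; [nra|lra]| apply Rinv_0_lt_compat; lra]. }
  assert (HGe : G * e0 < r * xi * D0 / 2).
  { assert (E : r * xi * D0 / 2 - G * e0 = r * xi * D0 / (2 * (G + 1))) by (unfold e0; field; lra).
    assert (0 < r * xi * D0 / (2 * (G + 1))) by exact He0. lra. }
  destruct (shrink N r xi f xs q p ord t HN Hr Hxi Hrun (e0 ^ N) (pow_lt _ _ He0)) as [L0 HL0].
  destruct (Hh (Nat.max L0 1)) as (l & Hl & Hl1 & j & Hj & Hx & Hcond).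
  cbv zeta in Hcond. destruct Hcond as [Hc1 Hc2].
  destruct (enum N r xi f xs q p ord t HN Hr Hxi Hrun l Hl1) as (Hs&He1&He2).
  assert (Hra := ord_range N r xi f xs q p ord t HN Hr Hxi Hrun l Hl1).
  assert (Hlb := charj_lb N r xi f (ord l) (q l) j (f xstar) xstar HN ltac:(lra) Hxi Hx
     (Hmin _ (Hra (j - 1)%nat ltac:(lia))) (Hmin _ (Hra j ltac:(lia))) Hc1 Hc2).
  assert (Hab : 2 * dl <= ord l j - ord l (j - 1)%nat).
  { destruct (He1 (j - 1)%nat ltac:(lia)) as (ka&Hka&Ea).
    destruct (He1 j ltac:(lia)) as (kb&Hkb&Eb).
    assert (H1 := Hdl ka ltac:(lia)). assert (H2 := Hdl kb ltac:(lia)).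
    rewrite <- Ea in H1. rewrite <- Eb in H2.
    rewrite Rabs_left in H1 by lra. rewrite Rabs_right in H2 by lra. lra. }
  assert (HPj : D0 <= Rpower (ord l j - ord l (j - 1)%nat) e).
  { apply Rle_Rpower_l; lra. }
  fold e in Hlb.
  destruct Hrun as (_&_&_&_&Hrl). destruct (Hrl l Hl1) as (_&Hp&_&Ht).
  destruct (Ht 1%nat ltac:(lia)) as (HT & _ & Hmax & _).
  assert (Hjt := Hmax j Hj ltac:(intros; lia)).
  assert (Hub := chart_ub N xi Hc f (ord l) (q l) HN Hxi Hhol Hs Hra r (t l 1%nat) (f xstar) ltac:(lra) HT Hmin).
  fold e G in Hub.
  assert (Hlen := HL0 l ltac:(lia) Hl1).
  assert (Hlp := len_pos N (ord l) (q l) HN Hs (t l 1%nat) HT).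
  assert (HPt : Rpower (ord l (t l 1%nat) - ord l (t l 1%nat - 1)%nat) e <= e0).
  { rewrite <- (Rpower_pow_root N e0) by auto. apply Rle_Rpower_l; fold e; lra. }
  assert (G * Rpower (ord l (t l 1%nat) - ord l (t l 1%nat - 1)%nat) e <= G * e0)
    by (apply Rmult_le_compat_l; auto).
  assert (r * xi * D0 / 2 <= r * xi * Rpower (ord l j - ord l (j - 1)%nat) e / 2).
  { assert (0 < r * xi) by nra. unfold Rdiv. apply Rmult_le_compat_r; [lra|]. apply Rmult_le_compat_l; lra. }
  lra.
Qed.
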